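(* For all integers $m,n\geq 2$, the grid $P_m\Box P_n$ has an independent $[1,2]$-set.
   Context: $P_k$ denotes the path on $k$ vertices and $P_m\Box P_n$ the Cartesian product of two paths (the $m\times n$ grid graph). A set $S$ of vertices of a graph $G$ is independent if no two vertices of $S$ are adjacent, and dominating if every vertex not in $S$ has at least one neighbor in $S$. An independent $[1,2]$-set of $G$ is an independent dominating set $S$ such that every vertex $v\in V(G)\setminus S$ has at least one and at most two neighbors in $S$. *)

(* Defs.v *)
From mathcomp Require Import all_boot.
Set Implicit Arguments. Unset Strict Implicit. Unset Printing Implicit Defensive.

Definition nbrs_in (T : finType) (adj : rel T) (S : {set T}) (v : T) : {set T} :=
  [set u in S | adj v u].

Definition independent (T : finType) (adj : rel T) (S : {set T}) : Prop :=
  forall u v, u \in S -> v \in S -> ~~ adj u v.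

Definition dominating (T : finType) (adj : rel T) (S : {set T}) : Prop :=
  forall v, v \notin S -> exists2 u, u \in S & adj v u.

Definition independent_12_set (T : finType) (adj : rel T) (S : {set T}) : Prop :=
  [/\ independent adj S, dominating adj S &
      forall v, v \notin S -> 1 <= #|nbrs_in adj S v| <= 2].

Definition path_adj (k : nat) : rel 'I_k :=
  fun i j => (i.+1 == j :> nat) || (j.+1 == i :> nat).

Definition grid_adj (m n : nat) : rel ('I_m * 'I_n) :=
  fun x y =>
    ((x.1 == y.1) && path_adj x.2 y.2) || ((x.2 == y.2) && path_adj x.1 y.1).

(* Main.v *)
Require Import Defs.
From mathcomp Require Import all_boot.
From mathcomp Require Import zify.

Set Implicit Arguments. Unset Strict Implicit.

Section G.
Variables m n : nat.
Definition cc := if (m + n - 1) %% 3 == 0 then 1 else 0.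
Definition SS : {set 'I_m * 'I_n} := [set x : 'I_m * 'I_n | (x.1 + x.2) %% 3 == cc].

Lemma adjE (u v : 'I_m * 'I_n) : grid_adj u v =
  (((u.1 : nat) == v.1) && ((u.2.+1 == v.2) || (v.2.+1 == u.2)))
  || (((u.2 : nat) == v.2) && ((u.1.+1 == v.1) || (v.1.+1 == u.1))).
Proof. by []. Qed.

Lemma cc_lt : cc < 2.
Proof. by rewrite /cc; case: ifP. Qed.

Lemma cc_ne : (m + n - 1) %% 3 != cc.
Proof. by rewrite /cc; case: ifP => [/eqP ->|/negbT]. Qed.

Lemma inSS (x : 'I_m * 'I_n) : (x \in SS) = ((x.1 + x.2) %% 3 == cc).
Proof. by rewrite inE. Qed.

Lemma indep : independent (@grid_adj m n) SS.
Proof.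
move=> u v; rewrite !inSS adjE => /eqP hu /eqP hv.
apply/negP => H.
have h1 := cc_lt.
case/orP: H => /andP [/eqP e /orP [] /eqP e'].
all: lia.
Qed.

Lemma upper (v : 'I_m * 'I_n) : #|nbrs_in (@grid_adj m n) SS v| <= 2.
Proof.
have -> : 2 = #|{: bool}| by rewrite card_bool.
apply: (@leq_card_in _ _ (fun u : 'I_m * 'I_n => (u.1 : nat) == v.1)).
move=> [a b] [a' b']; rewrite /nbrs_in !inE !adjE /= => /andP [/eqP h1 H1] /andP [/eqP h2 H2] E.
have h := cc_lt.
have [ea eb] : (a : nat) = a' /\ (b : nat) = b'.
  case/orP: H1 => /andP [/eqP e1 /orP [] /eqP e1'];
  case/orP: H2 => /andP [/eqP e2 /orP [] /eqP e2'];
  move: E; rewrite ?e1 ?e2 ?eqxx; try lia; move=> E; move/eqP: E; lia.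
by congr pair; apply/val_inj.
Qed.

Lemma lower (v : 'I_m * 'I_n) : v \notin SS -> 0 < #|nbrs_in (@grid_adj m n) SS v|.
Proof.
case: v => i j; rewrite inSS /= => /eqP hv.
have h := cc_lt; have h' := cc_ne; move/eqP: h' => h'.
apply/card_gt0P.
have [hs|hs] : ((i + j) %% 3 = (cc + 1) %% 3) \/ ((i + j) %% 3 = (cc + 2) %% 3) by lia.
- have [hi|hi] : 0 < (i : nat) \/ 0 < (j : nat) by lia.
  + exists (Ordinal (leq_ltn_trans (leq_pred i) (ltn_ord i)), j).
    rewrite /nbrs_in !inE adjE /= eqxx /=; apply/andP; split; apply/eqP; lia.
  + exists (i, Ordinal (leq_ltn_trans (leq_pred j) (ltn_ord j))).
    rewrite /nbrs_in !inE adjE /= eqxx /=; apply/andP; split; apply/eqP; lia.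
- have lti := ltn_ord i; have ltj := ltn_ord j.
  have [hi|hi] : (i.+1 < m) \/ (j.+1 < n) by lia.
  + exists (Ordinal hi, j).
    rewrite /nbrs_in !inE adjE /= eqxx /=; apply/andP; split; apply/eqP; lia.
  + exists (i, Ordinal hi).
    rewrite /nbrs_in !inE adjE /= eqxx /=; apply/andP; split; apply/eqP; lia.
Qed.
End G.

Theorem mainTheorem2 (m n : nat) (hm : 2 <= m) (hn : 2 <= n) :
  exists S : {set 'I_m * 'I_n}, independent_12_set (@grid_adj m n) S.
Proof.
exists (SS m n); split.
- exact: indep.
- move=> v /(lower) /card_gt0P [u]; rewrite /nbrs_in inE => /andP [h1 h2].
  by exists u.
- by move=> v hv; rewrite lower // upper.
Qed.
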